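(* If an $n$-agent network is $k$-redundant, then for any subset $\mathcal S\subset\mathcal V$ with $|\mathcal S|\ge n-k$, $$\arg\min_x\sum_{i\in\mathcal S}\|A_ix-b_i\|_2^2=\mathcal X^*.$$
   Context: An $n$-agent network: agents $\mathcal V=\{1,\dots,n\}$, each agent $i$ having real matrices $A_i\in\mathbb R^{r_i\times d}$, $b_i\in\mathbb R^{r_i}$; $\mathcal X^*=\arg\min_x\sum_{i=1}^n\|A_ix-b_i\|_2^2$ (the set of least squares solutions of $Ax=b$, $A,b$ the stackings of the $A_i,b_i$). The network is $k$-redundant ($k\in\{0,1,\dots,n-1\}$) if for any $\mathcal S_1,\mathcal S_2\subset\mathcal V$ with $|\mathcal S_1|=|\mathcal S_2|=n-k$, $\arg\min_x\sum_{i\in\mathcal S_1}\|A_ix-b_i\|_2^2=\arg\min_x\sum_{i\in\mathcal S_2}\|A_ix-b_i\|_2^2$. *)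

(* Defs.v *)
From HB Require Import structures.
From mathcomp Require Import all_boot all_order all_algebra.
Set Implicit Arguments. Unset Strict Implicit. Unset Printing Implicit Defensive.
Import Order.TTheory GRing.Theory Num.Theory.
Local Open Scope ring_scope.

Definition sqnorm (R : realFieldType) (m : nat) (v : 'cV[R]_m) : R :=
  \sum_(j < m) (v j 0) ^+ 2.

Definition lsq_cost (R : realFieldType) (n d : nat) (r : 'I_n -> nat)
  (A : forall i : 'I_n, 'M[R]_(r i, d)) (b : forall i : 'I_n, 'cV[R]_(r i))
  (S : {set 'I_n}) (x : 'cV[R]_d) : R :=
  \sum_(i in S) sqnorm (A i *m x - b i).

Definition lsq_argmin (R : realFieldType) (n d : nat) (r : 'I_n -> nat)
  (A : forall i : 'I_n, 'M[R]_(r i, d)) (b : forall i : 'I_n, 'cV[R]_(r i))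
  (S : {set 'I_n}) (x : 'cV[R]_d) : Prop :=
  forall y : 'cV[R]_d, lsq_cost A b S x <= lsq_cost A b S y.

Definition k_redundant (R : realFieldType) (n d : nat) (r : 'I_n -> nat)
  (A : forall i : 'I_n, 'M[R]_(r i, d)) (b : forall i : 'I_n, 'cV[R]_(r i))
  (k : nat) : Prop :=
  forall S1 S2 : {set 'I_n}, #|S1| = (n - k)%N -> #|S2| = (n - k)%N ->
    forall x : 'cV[R]_d, lsq_argmin A b S1 x <-> lsq_argmin A b S2 x.

(* Main.v *)
Require Import Defs.
From HB Require Import structures.
From mathcomp Require Import all_boot all_order all_algebra.
From mathcomp Require Import ring lra zify.
Set Implicit Arguments. Unset Strict Implicit. Unset Printing Implicit Defensive.
Import Order.TTheory GRing.Theory Num.Theory.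
Local Open Scope ring_scope.

Lemma sqnormE (R : realFieldType) m (v : 'cV[R]_m) : sqnorm v = (v^T *m v) 0 0.
Proof. rewrite /sqnorm !mxE; apply: eq_bigr => j _; by rewrite !mxE expr2. Qed.

Lemma sqnorm_ge0 (R : realFieldType) m (v : 'cV[R]_m) : 0 <= sqnorm v.
Proof. rewrite /sqnorm; apply: sumr_ge0 => j _; exact: sqr_ge0. Qed.

Lemma sqnorm_eq0 (R : realFieldType) m (v : 'cV[R]_m) : sqnorm v = 0 -> v = 0.
Proof.
move=> /eqP; rewrite /sqnorm psumr_eq0; last by move=> j _; exact: sqr_ge0.
move=> /allP H; apply/matrixP => i j; rewrite (ord1 j) !mxE.
have := H i (mem_index_enum _); rewrite /= sqrf_eq0 => /eqP //.
Qed.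

Lemma sqnormZ (R : realFieldType) m (t : R) (v : 'cV[R]_m) : sqnorm (t *: v) = t ^+ 2 * sqnorm v.
Proof. rewrite /sqnorm mulr_sumr; apply: eq_bigr => j _; by rewrite !mxE exprMn. Qed.

Lemma dotC (R : realFieldType) m (u w : 'cV[R]_m) : (u^T *m w) 0 0 = (w^T *m u) 0 0.
Proof. by rewrite -[in LHS](trmxK w) -trmx_mul mxE. Qed.

Lemma dotE (R : realFieldType) m (u w : 'cV[R]_m) : (w^T *m u) 0 0 = \sum_j w j 0 * u j 0.
Proof. rewrite !mxE; apply: eq_bigr => j _; by rewrite !mxE. Qed.

Lemma sqnormD (R : realFieldType) m (u w : 'cV[R]_m) :
  sqnorm (u + w) = sqnorm u + 2 * (w^T *m u) 0 0 + sqnorm w.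
Proof.
rewrite dotE /sqnorm mulr_sumr -!big_split /=; apply: eq_bigr => j _.
rewrite !mxE; ring.
Qed.

Definition gi (R : realFieldType) (n d : nat) (r : 'I_n -> nat)
  (A : forall i : 'I_n, 'M[R]_(r i, d)) (b : forall i : 'I_n, 'cV[R]_(r i)) i x :=
  (A i)^T *m (A i *m x - b i).

Definition G (R : realFieldType) (n d : nat) (r : 'I_n -> nat)
  (A : forall i : 'I_n, 'M[R]_(r i, d)) (b : forall i : 'I_n, 'cV[R]_(r i))
  (T : {set 'I_n}) x := \sum_(i in T) gi A b i x.

Lemma cost_expand (R : realFieldType) (n d : nat) (r : 'I_n -> nat)
  (A : forall i : 'I_n, 'M[R]_(r i, d)) (b : forall i : 'I_n, 'cV[R]_(r i))
  (T : {set 'I_n}) (x h : 'cV[R]_d) :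
  lsq_cost A b T (x + h) = lsq_cost A b T x + 2 * (h^T *m G A b T x) 0 0
     + \sum_(i in T) sqnorm (A i *m h).
Proof.
rewrite /lsq_cost /G mulmx_sumr summxE mulr_sumr -!big_split /=.
apply: eq_bigr => i _.
have -> : A i *m (x + h) - b i = (A i *m x - b i) + A i *m h by rewrite mulmxDr addrAC.
rewrite sqnormD /gi.
by rewrite trmx_mul mulmxA addrAC.
Qed.

Lemma argminG (R : realFieldType) (n d : nat) (r : 'I_n -> nat)
  (A : forall i : 'I_n, 'M[R]_(r i, d)) (b : forall i : 'I_n, 'cV[R]_(r i))
  (T : {set 'I_n}) (x : 'cV[R]_d) :
  lsq_argmin A b T x <-> G A b T x = 0.
Proof.
split; last first.
  move=> HG y; have -> : y = x + (y - x) by rewrite addrC subrK.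
  rewrite cost_expand HG mulmx0 mxE mulr0 addr0 lerDl.
  by apply: sumr_ge0 => i _; exact: sqnorm_ge0.
move=> H.
set g := G A b T x.
set q := \sum_(i in T) sqnorm (A i *m g).
set s := sqnorm g.
have q0 : 0 <= q by apply: sumr_ge0 => i _; exact: sqnorm_ge0.
have s0 : 0 <= s by exact: sqnorm_ge0.
set t := - (s / (q + 1)).
have := H (x + t *: g).
rewrite cost_expand linearZ /= -scalemxAl mxE -sqnormE.
have -> : \sum_(i in T) sqnorm (A i *m (t *: g)) = t ^+ 2 * q.
  rewrite /q mulr_sumr; apply: eq_bigr => i _; by rewrite -scalemxAr sqnormZ.
rewrite -addrA lerDl.
have q1 : q + 1 != 0 by rewrite gt_eqF // ltr_pwDr.
have -> : 2 * (t * s) + t ^+ 2 * q = - (s ^+ 2 * (q + 2) / (q + 1) ^+ 2).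
  rewrite /t; field; exact: q1.
rewrite oppr_ge0 ler_pdivrMr ?mul0r; last by rewrite exprn_gt0 // ltr_pwDr.
move=> hle.
have : s = 0 by nra.
by move/sqnorm_eq0.
Qed.

Lemma G_exists (R : realFieldType) (n d : nat) (r : 'I_n -> nat)
  (A : forall i : 'I_n, 'M[R]_(r i, d)) (b : forall i : 'I_n, 'cV[R]_(r i))
  (T : {set 'I_n}) : exists x, G A b T x = 0.
Proof.
set M := \sum_(i in T) (A i)^T *m A i.
set c := \sum_(i in T) (A i)^T *m b i.
have GE x : G A b T x = M *m x - c.
  rewrite /G /gi /M /c mulmx_suml -sumrB; apply: eq_bigr => i _.
  by rewrite mulmxBr mulmxA.
have MT : M^T = M.
  rewrite /M raddf_sum /=; apply: eq_bigr => i _; by rewrite trmx_mul trmxK.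
set W := cokermx M.
have key j : c^T *m (W *m (delta_mx j 0 : 'cV_d)) = 0.
  set w : 'cV_d := W *m delta_mx j 0.
  have Mw : M *m w = 0 by rewrite /w mulmxA mulmx_coker mul0mx.
  have Aw i : i \in T -> A i *m w = 0.
    have : \sum_(i in T) sqnorm (A i *m w) = 0.
      have := congr1 (fun X => (w^T *m X) 0 0) Mw.
      rewrite /= mulmx0 /M mulmx_suml mulmx_sumr summxE [X in _ = X]mxE => H0.
      rewrite -[RHS]H0; apply: eq_bigr => k _; by rewrite sqnormE trmx_mul !mulmxA.
    move/eqP; rewrite psumr_eq0; last by move=> k _; exact: sqnorm_ge0.
    move=> /allP Hall Hi; apply: sqnorm_eq0.
    have := Hall i (mem_index_enum _); by rewrite Hi /= => /eqP.
  rewrite /c raddf_sum /= mulmx_suml big1 // => i Hi.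
  by rewrite trmx_mul trmxK -mulmxA Aw // mulmx0.
have : (c^T <= M)%MS.
  rewrite submxE; apply/eqP/matrixP => i j.
  move: (key j); rewrite mulmxA -colE => /matrixP /(_ i 0).
  rewrite [in X in X -> _]mxE => ->; by rewrite !mxE.
move=> /submxP [D HD].
exists D^T; rewrite GE.
have -> : M *m D^T = (D *m M)^T by rewrite trmx_mul MT.
by rewrite -HD trmxK subrr.
Qed.

Lemma exists_sub (T : finType) (B : {set T}) k :
  (k <= #|B|)%N -> exists U : {set T}, U \subset B /\ #|U| = k.
Proof.
elim: k => [|k IH] hk; first by exists set0; rewrite sub0set cards0.
have [U [sUB cU]] := IH (ltnW hk).
have : (0 < #|B :\: U|)%N by rewrite cardsD (setIidPr sUB) cU subn_gt0.
move=> /card_gt0P [z]; rewrite inE => /andP [zU zB].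
exists (z |: U); split; first by rewrite subUset sub1set zB sUB.
by rewrite cardsU1 zU cU.
Qed.

Lemma exists_sub_in (T : finType) (i : T) m :
  (0 < m <= #|T|)%N -> exists U : {set T}, i \in U /\ #|U| = m.
Proof.
move=> /andP [m0 mT].
have h : (m.-1 <= #|[set~ i]|)%N by rewrite cardsC1 -!subn1 leq_sub2r.
have [U [sU cU]] := exists_sub h.
have iU : i \notin U by apply/negP => /(subsetP sU); rewrite !inE eqxx.
exists (i |: U); split; first by rewrite setU11.
by rewrite cardsU1 iU cU add1n prednK.
Qed.

Lemma exists_sub_avoid (T : finType) (i j : T) m : i != j ->
  (m.+2 <= #|T|)%N -> exists U : {set T}, i \notin U /\ j \notin U /\ #|U| = m.
Proof.
move=> ij hm.
have h : (m <= #|~: [set i; j]|)%N.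
  have := cardsC [set i; j]; rewrite cards2 ij => e.
  by move: hm; rewrite -e; lia.
have [U [sU cU]] := exists_sub h.
exists U; split; last split => //.
  by apply/negP => /(subsetP sU); rewrite !inE eqxx.
by apply/negP => /(subsetP sU); rewrite !inE eqxx orbT.
Qed.

Theorem corollary1 (R : realFieldType) (n d : nat) (r : 'I_n -> nat)
  (A : forall i : 'I_n, 'M[R]_(r i, d)) (b : forall i : 'I_n, 'cV[R]_(r i))
  (k : nat) (hk : (k < n)%N) :
  k_redundant A b k ->
  forall S : {set 'I_n}, (n - k <= #|S|)%N ->
    forall x : 'cV[R]_d, lsq_argmin A b S x <-> lsq_argmin A b setT x.
Proof.
move=> hred S hS y.
case: k hk hred hS => [|k] hk hred hS.
  have -> : S = setT; last by [].
  by apply/eqP; rewrite eqEcard subsetT cardsT card_ord; rewrite subn0 in hS.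
set m := (n - k.+1)%N.
have m0 : (0 < m)%N by rewrite /m subn_gt0.
have mn : (m <= #|'I_n|)%N by rewrite card_ord leq_subr.
have mT : (m <= #|[set: 'I_n]|)%N by rewrite cardsT.
have [T0 [_ cT0]] := exists_sub mT.
have [x0 Hx0] := G_exists A b T0.
have hX (T : {set 'I_n}) : #|T| = m -> G A b T x0 = 0.
  move=> cT; apply/argminG; apply/(hred T0 T cT0 cT); exact/argminG.
have hgeq i j : gi A b i x0 = gi A b j x0.
  have [->|ij] := eqVneq i j; first by [].
  have hm : (m.-1.+2 <= #|'I_n|)%N by rewrite card_ord prednK // /m; lia.
  have [U [iU [jU cU]]] := exists_sub_avoid ij hm.
  have cUi l : l \notin U -> #|l |: U| = m by move=> lU; rewrite cardsU1 lU cU add1n prednK.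
  have := hX _ (cUi _ iU); have := hX _ (cUi _ jU).
  rewrite /G (big_setU1 _ iU) (big_setU1 _ jU) /= => e1 e2.
  have : gi A b i x0 + \sum_(l in U) gi A b l x0 = gi A b j x0 + \sum_(l in U) gi A b l x0.
    by rewrite e1 e2.
  exact: addIr.
have hg i : gi A b i x0 = 0.
  have hm : (0 < m <= #|'I_n|)%N by rewrite m0 mn.
  have [T [iT cT]] := exists_sub_in i hm.
  have := hX _ cT; rewrite /G (eq_bigr (fun _ => gi A b i x0)); last by move=> l _; exact: hgeq.
  rewrite sumr_const cT -scaler_nat => /eqP; rewrite scaler_eq0 pnatr_eq0 (negbTE (lt0n_neq0 m0)) /=.
  by move/eqP.
have hG (T : {set 'I_n}) : G A b T x0 = 0 by rewrite /G big1.
have Z (T : {set 'I_n}) : lsq_argmin A b T y <-> (forall i, i \in T -> A i *m (y - x0) = 0).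
  have e : lsq_cost A b T y = lsq_cost A b T x0 + \sum_(i in T) sqnorm (A i *m (y - x0)).
    by rewrite -{1}(subrK x0 y) addrC cost_expand hG mulmx0 mxE mulr0 addr0.
  have x0m := (argminG A b T x0).2 (hG T).
  split.
    move=> hy; have := hy x0; rewrite e gerDl => hle.
    have : \sum_(i in T) sqnorm (A i *m (y - x0)) == 0.
      by rewrite eq_le hle sumr_ge0 // => i _; exact: sqnorm_ge0.
    rewrite psumr_eq0; last by move=> i _; exact: sqnorm_ge0.
    move=> /allP Hall i iT; apply: sqnorm_eq0.
    by have := Hall i (mem_index_enum _); rewrite iT /= => /eqP.
  move=> hz z; rewrite e big1 ?addr0; first exact: x0m.
  by move=> i iT; rewrite hz // /sqnorm big1 // => j _; rewrite mxE expr2 mul0r.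
rewrite !Z; split; last by move=> H i _; apply: H; rewrite inE.
move=> H i _.
have [T [sT cT]] := exists_sub hS.
have hm : (0 < m <= #|'I_n|)%N by rewrite m0 mn.
have [T' [iT' cT']] := exists_sub_in i hm.
have : lsq_argmin A b T y by apply/Z => l lT; apply: H; exact: (subsetP sT).
move/(hred T T' cT cT')/Z; exact.
Qed.
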